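(* Let $X_1,\dots,X_n$ be features and $Y$ a target that is not a.s. constant. Then for every $i\in\{1,\dots,n\}$, $\mathrm{FI}(i)\in[0,1]$.
   Context: All random variables are discrete with finite support and defined on a common probability space. For discrete random variables (or random vectors) $X$ and $Y$, define $$\mathrm{UD}(X,Y):=\sum_x p_X(x)\sum_y \bigl|p_{Y\mid X=x}(y)-p_Y(y)\bigr|,$$ and, when $Y$ is not almost surely constant, $\mathrm{Dep}(X,Y):=\mathrm{UD}(X,Y)/\mathrm{UD}(Y,Y)$. Given features $X_1,\dots,X_n$ with index set $\mathcal{F}=\{1,\dots,n\}$ and $S\subseteq\mathcal{F}$, write $X_S=(X_i)_{i\in S}$ ($X_\emptyset$ constant) and $\mathrm{Dep}(S,Y):=\mathrm{Dep}(X_S,Y)$. The Berkelmans–Pries feature importance is $$\mathrm{FI}(i):=\sum_{S\subseteq\mathcal{F}\setminus\{i\}}\frac{|S|!\,(n-|S|-1)!}{n!}\bigl(\mathrm{Dep}(S\cup\{i\},Y)-\mathrm{Dep}(S,Y)\bigr).$$ *)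

(* Defs.v *)
From mathcomp Require Import all_boot all_order all_algebra.
Set Implicit Arguments. Unset Strict Implicit. Unset Printing Implicit Defensive.
Import Order.TTheory GRing.Theory Num.Theory.
Local Open Scope ring_scope.

Section Defs.
Variables (R : realFieldType) (Omega : finType).

Definition is_pmf (P : Omega -> R) : Prop :=
  (forall w, 0 <= P w) /\ \sum_(w : Omega) P w = 1.

Definition prob (P : Omega -> R) (A : pred Omega) : R := \sum_(w | A w) P w.

(* UD(X,Y) = sum_x p_X(x) sum_y |p_{Y|X=x}(y) - p_Y(y)|,
   with p_{Y|X=x}(y) = P(X=x, Y=y) / P(X=x)  (terms with p_X(x)=0 vanish) *)
Definition UD {V W : finType} (P : Omega -> R) (X : Omega -> V) (Y : Omega -> W) : R :=
  \sum_(x : V) prob P (fun w => X w == x) *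
    \sum_(y : W) `| prob P (fun w => (X w == x) && (Y w == y)) / prob P (fun w => X w == x)
                   - prob P (fun w => Y w == y) |.

Definition Dep {V W : finType} (P : Omega -> R) (X : Omega -> V) (Y : Omega -> W) : R :=
  UD P X Y / UD P Y Y.

Definition as_constant {W : finType} (P : Omega -> R) (Y : Omega -> W) : Prop :=
  exists c : W, prob P (fun w => Y w == c) = 1.

(* the random vector X_S = (X_i)_{i in S}; coordinates outside S are None,
   so X_emptyset is constant *)
Definition XS {n : nat} {T : 'I_n -> finType} (X : forall i : 'I_n, Omega -> T i)
  (S : {set 'I_n}) (w : Omega) : {dffun forall i : 'I_n, option (T i)} :=
  @finfun 'I_n (fun i => option (T i)) (fun i => if i \in S then Some (X i w) else None).

Definition DepS {n : nat} {T : 'I_n -> finType} {W : finType} (P : Omega -> R)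
  (X : forall i : 'I_n, Omega -> T i) (Y : Omega -> W) (S : {set 'I_n}) : R :=
  Dep P (XS X S) Y.

Definition FI {n : nat} {T : 'I_n -> finType} {W : finType} (P : Omega -> R)
  (X : forall i : 'I_n, Omega -> T i) (Y : Omega -> W) (i : 'I_n) : R :=
  \sum_(S : {set 'I_n} | i \notin S)
    ((#|S|`! * (n - #|S| - 1)`!)%:R / (n`!)%:R) *
      (DepS P X Y (S :|: [set i]) - DepS P X Y S).

End Defs.

(* Main.v *)
Require Import Defs.
From mathcomp Require Import all_boot all_order all_algebra.
From Stdlib Require Import FunctionalExtensionality.
From mathcomp Require Import ring lra.
Import Order.TTheory GRing.Theory Num.Theory.
Local Open Scope ring_scope.

Section Helpers.
Variables (R : realFieldType) (Omega : finType) (P : Omega -> R).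
Hypothesis HP : is_pmf P.

Lemma prob_ge0 A : 0 <= prob P A.
Proof. by apply: sumr_ge0 => w _; case: HP. Qed.

Lemma prob_sub (A B : pred Omega) : (forall w, A w -> B w) -> prob P A <= prob P B.
Proof.
move=> AB; rewrite /prob [X in _ <= X](bigID A) /=.
rewrite -[X in X <= _]addr0 lerD //.
  by rewrite le_eqVlt (eq_bigl A) ?eqxx // => w; case Aw: (A w); rewrite ?andbF ?AB.
by apply: sumr_ge0 => w _; case: HP.
Qed.

Lemma prob_le1 A : prob P A <= 1.
Proof. by case: HP => _ <-; apply: (@prob_sub A predT). Qed.

Lemma prob_partition {V : finType} (A : pred Omega) (X : Omega -> V) :
  \sum_x prob P (fun w => A w && (X w == x)) = prob P A.
Proof. by rewrite /prob (partition_big X predT). Qed.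

Lemma prob_img {V V' : finType} (A : pred Omega) (X : Omega -> V) (f : V -> V') x' :
  prob P (fun w => A w && (f (X w) == x')) =
  \sum_(x | f x == x') prob P (fun w => A w && (X w == x)).
Proof.
rewrite /prob (partition_big X (fun x => f x == x')); last by move=> w /andP[].
apply: eq_bigr => x /eqP fx; apply: eq_bigl => w.
by case: (eqVneq (X w) x) => [->|ne]; rewrite ?fx ?eqxx ?andbT ?(negbTE ne) ?andbF.
Qed.

Definition pj {V W : finType} (X : Omega -> V) (Y : Omega -> W) x y :=
  prob P (fun w => (X w == x) && (Y w == y)).
Definition pm {V : finType} (X : Omega -> V) x := prob P (fun w => X w == x).

Lemma UD_alt {V W : finType} (X : Omega -> V) (Y : Omega -> W) :
  UD P X Y = \sum_x \sum_y `| pj X Y x y - pm X x * pm Y y |.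
Proof.
apply: eq_bigr => x _; rewrite mulr_sumr; apply: eq_bigr => y _.
rewrite /pj /pm.
have hx := prob_ge0 (fun w => X w == x).
have [px0|nz] := eqVneq (prob P (fun w => X w == x)) 0.
  have h0 : prob P (fun w => (X w == x) && (Y w == y)) = 0.
    apply/eqP; rewrite eq_le prob_ge0 andbT -px0.
    by apply: prob_sub => w /andP[].
  by rewrite px0 h0 mul0r sub0r mul0r normrN normr0.
rewrite -[X in X * _](ger0_norm hx) -normrM mulrBr mulrCA divff // mulr1.
by []. Qed.

Lemma pm_sum {V : finType} (X : Omega -> V) : \sum_x pm X x = 1.
Proof. by case: HP => _ h; rewrite -h; exact: (prob_partition predT X). Qed.

Lemma pj_sum {V W : finType} (X : Omega -> V) (Y : Omega -> W) y :
  \sum_x pj X Y x y = pm Y y.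
Proof.
rewrite /pm -(prob_partition (fun w => Y w == y) X); apply: eq_bigr => x _.
by apply: eq_bigl => w; rewrite andbC.
Qed.

Lemma pj_le {V W : finType} (X : Omega -> V) (Y : Omega -> W) x y :
  0 <= pj X Y x y <= pm X x.
Proof. by rewrite prob_ge0; apply: prob_sub => w /andP[]. Qed.

Lemma pm_ge0 {V : finType} (X : Omega -> V) x : 0 <= pm X x <= 1.
Proof. by rewrite prob_ge0 prob_le1. Qed.

Lemma UD_ge0 {V W : finType} (X : Omega -> V) (Y : Omega -> W) : 0 <= UD P X Y.
Proof. by rewrite UD_alt; apply: sumr_ge0 => x _; apply: sumr_ge0. Qed.

Lemma UD_mono {V V' W : finType} (X : Omega -> V) (X' : Omega -> V') (f : V -> V')
  (Y : Omega -> W) : (forall w, X' w = f (X w)) -> UD P X' Y <= UD P X Y.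
Proof.
move=> hX; rewrite !UD_alt.
have e1 x' y : pj X' Y x' y = \sum_(x | f x == x') pj X Y x y.
  rewrite /pj (eq_bigr (fun x => prob P (fun w => (Y w == y) && (X w == x)))); last first.
    by move=> x _; apply: eq_bigl => w; rewrite andbC.
  rewrite -prob_img; apply: eq_bigl => w; by rewrite hX andbC.
have e2 x' : pm X' x' = \sum_(x | f x == x') pm X x.
  rewrite /pm -(prob_img predT); apply: eq_bigl => w; by rewrite hX.
rewrite exchange_big /=.
rewrite [X in _ <= X](exchange_big) /=.
apply: ler_sum => y _.
rewrite [X in _ <= X](partition_big f predT) //=.
apply: ler_sum => x' _.
rewrite e1 e2 mulr_suml -sumrB.
apply: le_trans (ler_norm_sum _ _ _) _.
by rewrite le_eqVlt; apply/orP; left; apply/eqP; apply: eq_bigl.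
Qed.


Definition KY {W : finType} (Y : Omega -> W) := \sum_y 2 * (pm Y y * (1 - pm Y y)).

Lemma UD_le {V W : finType} (X : Omega -> V) (Y : Omega -> W) : UD P X Y <= KY Y.
Proof.
rewrite UD_alt exchange_big /=; apply: ler_sum => y _.
have h x : `|pj X Y x y - pm X x * pm Y y| <=
   2 * (pj X Y x y * (1 - pm Y y)) - (pj X Y x y - pm X x * pm Y y).
  have /andP[a1 a2] := pj_le X Y x y.
  have /andP[b1 b2] := pm_ge0 Y y.
  have c1 : 0 <= pj X Y x y * (1 - pm Y y) by apply: mulr_ge0; rewrite // subr_ge0.
  have c2 : 0 <= pm Y y * (pm X x - pj X Y x y) by apply: mulr_ge0; rewrite // subr_ge0.
  rewrite ler_norml; apply/andP; split.
    rewrite -subr_ge0. 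
    have -> : pj X Y x y - pm X x * pm Y y -
      - (2 * (pj X Y x y * (1 - pm Y y)) - (pj X Y x y - pm X x * pm Y y)) =
      2 * (pj X Y x y * (1 - pm Y y)) by ring.
    by rewrite mulr_ge0.
  rewrite -subr_ge0.
  have -> : 2 * (pj X Y x y * (1 - pm Y y)) - (pj X Y x y - pm X x * pm Y y) -
      (pj X Y x y - pm X x * pm Y y) = 2 * (pm Y y * (pm X x - pj X Y x y)) by ring.
  by rewrite mulr_ge0.
apply: le_trans (ler_sum _ (fun x _ => h x)) _.
rewrite sumrB -mulr_sumr -mulr_suml pj_sum sumrB -mulr_suml pj_sum pm_sum.
by rewrite mul1r subrr subr0.
Qed.


Lemma UDYY {W : finType} (Y : Omega -> W) : UD P Y Y = KY Y.
Proof.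
rewrite UD_alt; apply: eq_bigr => y1 _.
have hs := pm_sum Y; rewrite (bigD1 y1) //= in hs.
rewrite (bigD1 y1) //=.
have -> : pj Y Y y1 y1 = pm Y y1 by apply: eq_bigl => w; rewrite andbb.
rewrite (eq_bigr (fun y => pm Y y1 * pm Y y)); last first.
  move=> y ne.
  have -> : pj Y Y y1 y = 0.
    apply: big_pred0 => w; case: (eqVneq (Y w) y1) => [->|] //=.
    by rewrite eq_sym (negbTE ne).
  rewrite sub0r normrN ger0_norm // mulr_ge0 //.
    by case/andP: (pm_ge0 Y y1).
  by case/andP: (pm_ge0 Y y).
rewrite -mulr_sumr.
have -> : \sum_(i | i != y1) pm Y i = 1 - pm Y y1 by rewrite -hs; ring.
have /andP[b1 b2] := pm_ge0 Y y1.
rewrite ger0_norm; last first.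
  have -> : pm Y y1 - pm Y y1 * pm Y y1 = pm Y y1 * (1 - pm Y y1) by ring.
  by rewrite mulr_ge0 // subr_ge0.
ring.
Qed.

Lemma KY_gt0 {W : finType} (Y : Omega -> W) : ~ as_constant P Y -> 0 < KY Y.
Proof.
move=> nc.
have [y py] : exists y, pm Y y != 0.
  apply/existsP; apply: contraT; rewrite negb_exists => /forallP h.
  have := pm_sum Y; rewrite big1 ?oner_eq0 //.
    by move=> /eqP; rewrite eq_sym oner_eq0.
  by move=> y _; apply/eqP; move: (h y); rewrite negbK.
have /andP[b1 b2] := pm_ge0 Y y.
have p1 : pm Y y < 1.
  rewrite lt_neqAle b2 andbT; apply/eqP => e; apply: nc; by exists y.
have t : 0 < 2 * (pm Y y * (1 - pm Y y)).
  by rewrite mulr_gt0 // mulr_gt0 // ?subr_gt0 // lt_neqAle eq_sym py.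
rewrite /KY (bigD1 y) //=; apply: lt_le_trans t _.
rewrite lerDl; apply: sumr_ge0 => z _.
have /andP[c1 c2] := pm_ge0 Y z.
by rewrite mulr_ge0 // mulr_ge0 // subr_ge0.
Qed.

End Helpers.

Lemma wsum m (i : 'I_m.+1) :
  (\sum_(S : {set 'I_m.+1} | i \notin S) #|S|`! * (m.+1 - #|S| - 1)`! = m.+1`!)%N.
Proof.
have cardS (S : {set 'I_m.+1}) : i \notin S -> (#|S| <= m)%N.
  move=> ni; suff : (#|S| <= #|[set~ i]|)%N by rewrite cardsC1 card_ord.
  apply: subset_leq_card; apply/subsetP => j jS; rewrite in_setC1.
  by apply: contra ni => /eqP <-.
rewrite (partition_big (fun S : {set 'I_m.+1} => (inord #|S| : 'I_m.+1)) predT) //=.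
rewrite (eq_bigr (fun k : 'I_m.+1 => m`!)).
  by rewrite sum_nat_const card_ord factS.
move=> k _.
rewrite (eq_bigr (fun _ => k`! * (m - k)`!)%N); last first.
  move=> S /andP[ni /eqP <-]; rewrite inordK ?ltnS ?cardS //.
  by rewrite subnAC subn1.
rewrite sum_nat_const.
have -> : #|[pred S : {set 'I_m.+1} | (i \notin S) && (inord #|S| == k)]| =
   #|[set A : {set 'I_m.+1} | A \subset [set~ i] & #|A| == k]|.
  apply: eq_card => S; rewrite !inE.
  have e1 : (S \subset [set~ i]) = (i \notin S).
    apply/subsetP/idP => [h|ni j jS]; last by rewrite in_setC1; apply: contra ni => /eqP <-.
    by apply/negP => iS; move: (h i iS); rewrite in_setC1 eqxx.
  rewrite e1; case: (boolP (i \in S)) => //= ni.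
  by rewrite -(inj_eq val_inj) /= inordK // ltnS cardS.
rewrite cards_draws cardsC1 card_ord /= bin_fact //.
by rewrite -ltnS.
Qed.

Theorem mainTheorem4 (R : realFieldType) (Omega : finType) (P : Omega -> R)
  (n : nat) (T : 'I_n -> finType) (W : finType)
  (X : forall i : 'I_n, Omega -> T i) (Y : Omega -> W) :
  is_pmf P -> ~ as_constant P Y ->
  forall i : 'I_n, 0 <= FI P X Y i <= 1.
Proof.
move=> hP nc i.
have Kp : 0 < UD P Y Y by rewrite UDYY // KY_gt0.
have d (S : {set 'I_n}) : i \notin S ->
    0 <= DepS P X Y (S :|: [set i]) - DepS P X Y S <= 1.
  move=> ni; rewrite /DepS /Dep.
  have mono : UD P (XS X S) Y <= UD P (XS X (S :|: [set i])) Y.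
    apply: (@UD_mono R Omega P hP _ _ _ (XS X (S :|: [set i])) (XS X S) (fun g : {dffun forall j : 'I_n, option (T j)} =>
      @finfun 'I_n (fun j => option (T j)) (fun j => if j \in S then g j else None))).
    move=> w; apply/ffunP => j; rewrite !ffunE.
    by case: (boolP (j \in S)) => jS //; rewrite in_setU jS.
  have le1 : UD P (XS X (S :|: [set i])) Y <= UD P Y Y by rewrite UDYY // UD_le.
  have g0 : 0 <= UD P (XS X S) Y by apply: UD_ge0.
  apply/andP; split.
    by rewrite subr_ge0 ler_wpM2r // invr_ge0 ltW.
  rewrite lerBlDr; apply: (@le_trans _ _ 1).
    by rewrite ler_pdivrMr // mul1r.
  by rewrite lerDl divr_ge0 // ltW.
have wsumR : \sum_(S : {set 'I_n} | i \notin S)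
    ((#|S|`! * (n - #|S| - 1)`!)%:R / (n`!)%:R) = 1 :> R.
  rewrite -mulr_suml -natr_sum; move: i {d}; case: n T X => [|m] T X i; first by case: i.
  by rewrite wsum divff // pnatr_eq0 -lt0n fact_gt0.
have w0 (S : {set 'I_n}) : 0 <= ((#|S|`! * (n - #|S| - 1)`!)%:R / (n`!)%:R) :> R.
  by rewrite divr_ge0.
rewrite /FI; apply/andP; split.
  apply: sumr_ge0 => S ni; rewrite mulr_ge0 //.
  by case/andP: (d S ni).
rewrite -[X in _ <= X]wsumR; apply: ler_sum => S ni.
rewrite -[X in _ <= X]mulr1; apply: ler_wpM2l => //.
by case/andP: (d S ni).
Qed.
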